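(* For infinitely many $n\in\mathbb{N}$ there exist matroids $M=(E,\mathcal{I})$ and $M'=(E,\mathcal{I}')$ over the same ground set $E$ with $|E|=n$ and a weight function $w:E\to\{0,1\}$ such that $M$ and $M'$ have exactly two common bases $B$ and $B'$, and these satisfy: (1) $w(B)=0$ and $w(B')=1$; (2) $B\cap B'=\emptyset$ and $|B|=|B'|=n/2$.
   Context: A common basis of $M$ and $M'$ is a set that is a basis of both. $w(S)=\sum_{e\in S}w(e)$. *)

(* Defs.v *)
From mathcomp Require Import all_boot.
Set Implicit Arguments. Unset Strict Implicit. Unset Printing Implicit Defensive.

Definition is_matroid (T : finType) (I : {set {set T}}) : Prop :=
  [/\ set0 \in I,
      (forall A B : {set T}, B \in I -> A \subset B -> A \in I) &
      (forall A B : {set T}, A \in I -> B \in I -> #|A| < #|B| ->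
          exists2 e, e \in B :\: A & e |: A \in I)].

Definition is_basis (T : finType) (I : {set {set T}}) (B : {set T}) : Prop :=
  B \in I /\ (forall C : {set T}, C \in I -> B \subset C -> C = B).

Definition common_basis (T : finType) (I I' : {set {set T}}) (B : {set T}) : Prop :=
  is_basis I B /\ is_basis I' B.

Definition wsum (T : finType) (w : T -> nat) (S : {set T}) : nat :=
  \sum_(e in S) w e.

(* Main.v *)
Require Import Defs.
From mathcomp Require Import all_boot.
From mathcomp Require Import zify.
Set Implicit Arguments. Unset Strict Implicit.

Section PM.
Variables (T : finType) (blk : T -> nat).

Definition indep : {set {set T}} :=
  [set A : {set T} | [forall x in A, forall y in A, (blk x == blk y) ==> (x == y)]].

Lemma indepP (A : {set T}) : reflect (forall x y, x \in A -> y \in A -> blk x = blk y -> x = y)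
  (A \in indep).
Proof.
rewrite inE; apply: (iffP forallP) => H.
- move=> x y xA yA e; have := H x; rewrite xA /= => /forall_inP/(_ y yA).
  by rewrite e eqxx /= => /eqP.
- move=> x; apply/implyP=> xA; apply/forall_inP => y yA; apply/implyP => /eqP e.
  by apply/eqP; exact: H.
Qed.

Lemma addI (A : {set T}) e : A \in indep -> (forall a, a \in A -> blk a = blk e -> False) ->
  e |: A \in indep.
Proof.
move=> /indepP HA H; apply/indepP => x y; rewrite !inE.
case/predU1P=> [->|xA]; case/predU1P=> [->|yA] //.
- by move=> e1; case: (H y yA).
- by move=> e1; case: (H x xA).
- exact: HA.
Qed.

Lemma pm_matroid : is_matroid indep.
Proof.
split.
- by apply/indepP => x y; rewrite inE.
- move=> A B /indepP HB sAB; apply/indepP => x y xA yA; apply: HB;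
  exact: (subsetP sAB).
- move=> A B AI BI ltAB.
  case: (pickP [pred e | (e \in B :\: A) && (e |: A \in indep)]) =>
    [e /andP[eBA eI] | none]; first by exists e.
  exfalso.
  have key : forall e, e \in B -> e \notin A -> exists2 a, a \in A & blk a = blk e.
    move=> e eB eA.
    case: (pickP [pred a | (a \in A) && (blk a == blk e)]) =>
      [a /andP[aA /eqP ea] | noa]; first by exists a.
    have : e |: A \in indep.
      apply: addI => // a aA ea; have := noa a; by rewrite /= aA ea eqxx.
    by have := none e; rewrite /= !inE eA eB /= => ->.
  pose f e := if e \in A then e
              else odflt e [pick a | (a \in A) && (blk a == blk e)].
  have fE : forall e, blk (f e) = blk e.
    move=> e; rewrite /f; case: ifP => // _.
    by case: pickP => [a /andP[_ /eqP]|] .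
  have fA : forall e, e \in B -> f e \in A.
    move=> e eB; rewrite /f; case: ifP => // eA.
    case: pickP => [a /andP[aA _] //| noa].
    have [a aA ea] := key e eB (negbT eA).
    by have := noa a; rewrite /= aA ea eqxx.
  have : #|f @: B| <= #|A|.
    apply: subset_leq_card; apply/subsetP => _ /imsetP[e eB ->]; exact: fA.
  rewrite card_in_imset; first by rewrite leqNgt ltAB.
  move=> x y xB yB fxy; move/indepP: BI; apply => //.
  by rewrite -(fE x) fxy fE.
Qed.

Lemma pm_basis k (Hr : forall x, blk x < k)
  (Hs : forall v, v < k -> exists y, blk y = v) C :
  is_basis indep C <-> (C \in indep /\ forall v, v < k -> exists2 x, x \in C & blk x = v).
Proof.
split.
- move=> [CI Cmax]; split => // v vk.
  have [y yv] := Hs v vk.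
  case: (pickP [pred x | (x \in C) && (blk x == v)]) =>
    [x /andP[xC /eqP xv] | none]; first by exists x.
  have yI : y |: C \in indep.
    apply: addI => // a aC ea; have := none a; by rewrite /= aC ea yv eqxx.
  have := Cmax _ yI (subsetUr _ _) => E.
  have : y \in C by rewrite -E setU11.
  by move=> yC; have := none y; rewrite /= yC yv eqxx.
- move=> [CI Hhit]; split => // D /indepP HD sCD.
  apply/eqP; rewrite eqEsubset sCD andbT; apply/subsetP => d dD.
  have [c cC cd] := Hhit (blk d) (Hr d).
  have -> // : d = c.
  by apply: HD => //; exact: (subsetP sCD).
Qed.

End PM.
Section Conc.
Variable N : nat.
Let k := N.+1.
Let m := N.+1 + N.
Let n := m.+1.
Let kn : k + k = n. Proof. rewrite /k /n /m; lia. Qed.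

Definition blk1 (x : 'I_n) : nat := if x < k then nat_of_ord x else x - k.
Definition blk2 (x : 'I_n) : nat :=
  if x < k then nat_of_ord x else if x.+1 < n then x - k + 1 else 0.

Lemma blk1r x : blk1 x < k.
Proof. have := ltn_ord x; have := kn; rewrite /blk1; case: ifP; lia. Qed.
Lemma blk2r x : blk2 x < k.
Proof. have := ltn_ord x; have := kn; rewrite /blk2; case: ifP => ?; try case: ifP => ?; lia. Qed.
Lemma blks v : v < k -> exists y : 'I_n, nat_of_ord y = v.
Proof. move=> vk; have vn : v < n by have := kn; lia. by exists (Ordinal vn). Qed.
Lemma blk1s v : v < k -> exists y, blk1 y = v.
Proof. move=> vk; have [y yv] := blks vk; exists y; rewrite /blk1 yv; case: ifP => //; lia. Qed.
Lemma blk2s v : v < k -> exists y, blk2 y = v.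
Proof. move=> vk; have [y yv] := blks vk; exists y; rewrite /blk2 yv; case: ifP => //; lia. Qed.

Definition B : {set 'I_n} := [set x : 'I_n | x < k].
Definition B' : {set 'I_n} := [set x : 'I_n | k <= x].

Lemma ordE (x : 'I_n) i : nat_of_ord x = i -> x = inord i.
Proof. by move=> <-; rewrite inord_val. Qed.

Lemma char C : common_basis (indep blk1) (indep blk2) C <-> (C = B \/ C = B').
Proof.
rewrite /common_basis (pm_basis blk1r blk1s) (pm_basis blk2r blk2s).
have kn' := kn.
split.
- move=> [[/indepP I1 H1] [/indepP I2 H2]].
  have F1 : forall i, i < k -> (inord (i + k) \in C) = ~~ (inord i \in C).
    move=> i ik; have [x xC] := H1 i ik.
    rewrite /blk1; case: ifP => xk xi.
    + rewrite -(ordE xi) xC /=; apply/negP => iC.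
      have := I1 _ _ xC iC; rewrite /blk1 xk inordK; last lia.
      have -> : (i + k < k) = false by lia.
      move=> /(_ ltac:(lia)) /(congr1 (@nat_of_ord _)); rewrite inordK; lia.
    + rewrite -(@ordE x (i + k)); last lia. rewrite xC; apply/esym/negP => iC.
      have := I1 _ _ xC iC; rewrite /blk1 xk inordK; last lia.
      have -> : (i < k) = true by lia.
      move=> /(_ ltac:(lia)) /(congr1 (@nat_of_ord _)); rewrite inordK; lia.
  have F2 : forall i, i.+1 < k -> (inord (k + i) \in C) = ~~ (inord i.+1 \in C).
    move=> i ik; have [x xC] := H2 i.+1 ik.
    rewrite /blk2; case: ifP => xk; [|case: ifP => xn]; move=> xi; try lia.
    + rewrite -(ordE xi) xC /=; apply/negP => iC.
      have := I2 _ _ xC iC; rewrite /blk2 xk inordK; last lia.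
      have -> : (k + i < k) = false by lia.
      have -> : ((k + i).+1 < n) = true by lia.
      move=> /(_ ltac:(lia)) /(congr1 (@nat_of_ord _)); rewrite inordK; lia.
    + rewrite -(@ordE x (k + i)); last lia. rewrite xC; apply/esym/negP => iC.
      have := I2 _ _ xC iC; rewrite /blk2 xk xn inordK; last lia.
      have -> : (i.+1 < k) = true by lia.
      move=> /(_ ltac:(lia)) /(congr1 (@nat_of_ord _)); rewrite inordK; lia.
  have F : forall i, i < k -> (inord i \in C) = (inord 0 \in C).
    elim=> [//|i IH] ik.
    have := F2 i ik; rewrite (addnC k i) F1; last lia.
    rewrite IH; last lia.
    by case: (inord i.+1 \in C); case: (inord 0 \in C).
  have G : forall x : 'I_n, (x \in C) = if x < k then inord 0 \in C else ~~ (inord 0 \in C).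
    move=> x; have xn := ltn_ord x; case: ifP => xk.
    + by rewrite (ordE (erefl (nat_of_ord x))) F.
    + rewrite (@ordE x (x - k + k)); last lia.
      rewrite F1; last lia. rewrite F //; lia.
  case: (boolP (inord 0 \in C)) => c0; [left|right]; apply/setP => x;
    rewrite G !inE c0; case: ifP => //; lia.
- have Hl : forall x : 'I_n, (x < k) = false -> k <= x by lia.
  case=> ->; rewrite /B /B'; split; split.
  + apply/indepP => x y; rewrite !inE /blk1 => -> -> e; exact: ord_inj.
  + move=> v vk; have [y yv] := blks vk; exists y; [by rewrite inE yv | by rewrite /blk1 yv vk].
  + apply/indepP => x y; rewrite !inE /blk2 => -> -> e; exact: ord_inj.
  + move=> v vk; have [y yv] := blks vk; exists y; [by rewrite inE yv | by rewrite /blk2 yv vk].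
  + apply/indepP => x y; rewrite !inE /blk1 => xk yk.
    have := ltn_ord x; have := ltn_ord y => yn xn.
    have -> : (x < k) = false by lia.
    have -> : (y < k) = false by lia.
    move=> e; apply: ord_inj; lia.
  + move=> v vk; exists (inord (v + k)).
    * rewrite inE inordK; lia.
    * rewrite /blk1 inordK; last lia. case: ifP => ?; lia.
  + apply/indepP => x y; rewrite !inE /blk2 => xk yk.
    have := ltn_ord x; have := ltn_ord y => yn xn.
    have -> : (x < k) = false by lia.
    have -> : (y < k) = false by lia.
    case: ifP => ?; case: ifP => ? e; apply: ord_inj; lia.
  + case=> [|v] vk.
    * exists (inord (k + k - 1)).
      - rewrite inE inordK; lia.
      - rewrite /blk2 inordK; last lia. case: ifP => ?; try lia. case: ifP => ?; lia.
    * exists (inord (k + v)).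
      - rewrite inE inordK; lia.
      - rewrite /blk2 inordK; last lia. case: ifP => ?; try lia. case: ifP => ?; lia.
Qed.

End Conc.

Theorem theorem19 :
  forall N : nat, exists2 n : nat, N <= n &
    exists (I I' : {set {set 'I_n}}) (w : 'I_n -> nat),
      [/\ is_matroid I, is_matroid I' & forall e, w e <= 1] /\
      exists (B B' : {set 'I_n}),
        [/\ B != B',
            (forall C : {set 'I_n}, common_basis I I' C <-> (C = B \/ C = B')),
            wsum w B = 0 /\ wsum w B' = 1 &
            [/\ [disjoint B & B'], 2 * #|B| = n & 2 * #|B'| = n]].
Proof.
move=> N; exists (N.+1 + N).+1; first lia.
exists (indep (@blk1 N)), (indep (@blk2 N)),
  (fun x => nat_of_bool (nat_of_ord x == N.+1)).
split; first by split; [exact: pm_matroid | exact: pm_matroid | move=> e; exact: leq_b1].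
exists (B N), (B' N).
have cB : #|B N| = N.+1.
  have -> : B N = [set inord (nat_of_ord i) | i : 'I_N.+1].
    apply/setP => x; rewrite /B inE; apply/idP/imsetP.
    - move=> xk; exists (Ordinal xk) => //; apply: ord_inj; rewrite inordK //=; lia.
    - case=> i _ ->; have := ltn_ord i => ?; rewrite inordK; lia.
  rewrite card_imset ?card_ord // => i j.
  have := ltn_ord i; have := ltn_ord j => ? ?.
  move/(congr1 (@nat_of_ord _)); rewrite !inordK; try lia.
  move=> e; exact: ord_inj.
have cB' : #|B' N| = N.+1.
  have -> : B' N = ~: B N by apply/setP => x; rewrite /B /B' !inE -leqNgt.
  have := cardsC (B N); rewrite card_ord; lia.
split.
- apply/eqP => E.
  have : (ord0 : 'I_(N.+1 + N).+1) \in B N by rewrite /B inE.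
  by rewrite E /B' inE.
- exact: char.
- split.
  + rewrite /wsum big1 // => x; rewrite /B inE => xk; by rewrite ltn_eqF.
  + rewrite /wsum (bigD1 (inord N.+1)) /=; last by rewrite /B' inE inordK //; lia.
    rewrite inordK; last lia.
    rewrite eqxx big1 // => x /andP[]; rewrite /B' inE => xk xne.
    suff -> : (nat_of_ord x == N.+1) = false by [].
    apply/negbTE/eqP => e; move/eqP: xne; apply; apply: ord_inj.
    rewrite inordK; lia.
- split.
  + rewrite -setI_eq0; apply/eqP/setP => x; rewrite /B /B' !inE.
    by apply/negbTE/negP => /andP[]; lia.
  + rewrite cB; lia.
  + rewrite cB'; lia.
Qed.
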